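(* Let $\Phi=\{\varphi_j\}_{j=1}^n\subset\mathbb{C}^d$ be a doubly transitive (i.e. doubly covariant) equiangular tight frame with $n>d$. Then for all pairwise distinct $j,k,\ell\in\{1,\dots,n\}$ there exists a $2n$-th root of unity $\zeta_{j,k,\ell}$ such that \[\langle\varphi_j,\varphi_k\rangle\langle\varphi_k,\varphi_\ell\rangle\langle\varphi_\ell,\varphi_j\rangle=\zeta_{j,k,\ell}\left(\frac{n-d}{d(n-1)}\right)^{3/2}.\]
   Context: A set $\Phi=\{\varphi_j\}_{j=1}^n\subset\mathbb{C}^d$ is an equiangular tight frame (ETF) if (1) for all $x\in\mathbb{C}^d$, $x=\frac{d}{n}\sum_{j=1}^n\langle x,\varphi_j\rangle\varphi_j$; (2) $\|\varphi_j\|=1$ for all $j$; (3) there is $\alpha\ge 0$ with $|\langle\varphi_j,\varphi_k\rangle|=\alpha$ for all $j\neq k$. Let $G$ be the group of unitary operators $U$ on $\mathbb{C}^d$ such that there is a permutation $\sigma$ of $\{1,\dots,n\}$ with $U\varphi_j\varphi_j^*U^*=\varphi_{\sigma(j)}\varphi_{\sigma(j)}^*$ for all $j$; the symmetry group of $\Phi$ is $G/S^1$, which acts on $\{1,\dots,n\}$ via these permutations. $\Phi$ is doubly transitive (doubly covariant) if this action is $2$-transitive, i.e. maps every ordered pair of distinct indices to every ordered pair of distinct indices. *)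

(* Defs.v *)
From HB Require Import structures.
From mathcomp Require Import all_boot all_order all_algebra all_fingroup.
From mathcomp Require Import complex.
From mathcomp Require Import reals.
Set Implicit Arguments. Unset Strict Implicit. Unset Printing Implicit Defensive.
Import Order.TTheory GRing.Theory Num.Theory.
Local Open Scope ring_scope.

Section ETF.
Variable R : realType.
Local Notation C := R[i].

Definition adjmx m p (A : 'M[C]_(m, p)) : 'M[C]_(p, m) := (map_mx Num.conj A)^T.

(* inner product on C^d (column vectors), linear in the first argument:
   <x, y> = sum_i x_i * conj(y_i) *)
Definition inner d (x y : 'cV[C]_d) : C := \sum_(i < d) x i 0 * (y i 0)^*.

Definition proj1 d (v : 'cV[C]_d) : 'M[C]_d := v *m adjmx v.

Definition unitary d (U : 'M[C]_d) : Prop := adjmx U *m U = 1%:M.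

Definition is_ETF d n (phi : 'I_n -> 'cV[C]_d) : Prop :=
  [/\ (forall x : 'cV[C]_d,
         x = ((d%:R / n%:R) : C) *: \sum_(j < n) (inner x (phi j) *: phi j)),
      (forall j, inner (phi j) (phi j) = 1) &
      (exists alpha : R, 0 <= alpha /\
         forall j k, j != k -> `|inner (phi j) (phi k)| = (alpha%:C)%C)].

Definition sym_with d n (phi : 'I_n -> 'cV[C]_d) (U : 'M[C]_d) (sigma : 'S_n) :=
  unitary U /\
  forall j, U *m proj1 (phi j) *m adjmx U = proj1 (phi (sigma j)).

Definition doubly_transitive d n (phi : 'I_n -> 'cV[C]_d) : Prop :=
  forall j1 k1 j2 k2 : 'I_n, j1 != k1 -> j2 != k2 ->
    exists U : 'M[C]_d, exists sigma : 'S_n,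
      sym_with phi U sigma /\ sigma j1 = j2 /\ sigma k1 = k2.

End ETF.

(* Main.v *)
Require Import Defs.
From HB Require Import structures.
From mathcomp Require Import all_boot all_order all_algebra all_fingroup.
From mathcomp Require Import complex.
From mathcomp Require Import reals.
From mathcomp Require Import ring lra.
Set Implicit Arguments. Unset Strict Implicit. Unset Printing Implicit Defensive.
Import Order.TTheory GRing.Theory Num.Theory.
Local Open Scope ring_scope.

Lemma adj_mul (R : realType) d (x y : 'cV[R[i]]_d) :
  adjmx x *m y = (inner y x)%:M.
Proof.
apply/matrixP => a b; rewrite !ord1 !mxE eqxx mulr1n /inner.
by apply: eq_bigr => i _; rewrite !mxE mulrC.
Qed.

Lemma innerC (R : realType) d (x y : 'cV[R[i]]_d) :
  inner y x = (inner x y)^*.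
Proof.
rewrite /inner rmorph_sum; apply: eq_bigr => i _.
by rewrite rmorphM /= conjCK mulrC.
Qed.

Lemma inner_sum (R : realType) d n (a : 'I_n -> R[i]) (v : 'I_n -> 'cV[R[i]]_d) y :
  inner (\sum_(j < n) a j *: v j) y = \sum_(j < n) a j * inner (v j) y.
Proof.
rewrite /inner.
under eq_bigr do rewrite summxE big_distrl /=.
rewrite exchange_big /=; apply: eq_bigr => j _.
rewrite big_distrr /=; apply: eq_bigr => i _.
by rewrite mxE mulrA.
Qed.

Lemma inner_scale (R : realType) d (a : R[i]) (x y : 'cV[R[i]]_d) :
  inner (a *: x) y = a * inner x y.
Proof.
rewrite /inner big_distrr; apply: eq_bigr => i _.
by rewrite mxE /= mulrA.
Qed.

Lemma proj_mul (R : realType) d (u v w z : 'cV[R[i]]_d) :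
  (u *m adjmx v) *m (w *m adjmx z) = inner w v *: (u *m adjmx z).
Proof.
by rewrite mulmxA -(mulmxA u) adj_mul mul_mx_scalar scalemxAl.
Qed.
Definition T3 (R : realType) d n (phi : 'I_n -> 'cV[R[i]]_d) (j k l : 'I_n) :=
  inner (phi j) (phi k) * inner (phi k) (phi l) * inner (phi l) (phi j).

Lemma proj_triple (R : realType) d (u v w : 'cV[R[i]]_d) :
  proj1 u *m proj1 w *m proj1 v *m proj1 u =
  (inner u v * inner v w * inner w u) *: proj1 u.
Proof.
rewrite /proj1 proj_mul -scalemxAl proj_mul scalerA -scalemxAl proj_mul scalerA.
congr (_ *: _); ring.
Qed.

Lemma conj_mx_mul (R : realType) d (U A B : 'M[R[i]]_d) :
  adjmx U *m U = 1%:M ->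
  U *m (A *m B) *m adjmx U = (U *m A *m adjmx U) *m (U *m B *m adjmx U).
Proof.
move=> HU.
by rewrite !mulmxA -(mulmxA _ (adjmx U) U) HU mulmx1.
Qed.

Lemma extract_scalar (R : realType) d (u : 'cV[R[i]]_d) (a b : R[i]) :
  inner u u = 1 -> a *: proj1 u = b *: proj1 u -> a = b.
Proof.
move=> Hu H.
have: adjmx u *m (a *: proj1 u) *m u = adjmx u *m (b *: proj1 u) *m u by rewrite H.
rewrite /proj1 -!scalemxAr -!scalemxAl !mulmxA adj_mul -mulmxA adj_mul Hu.
rewrite mul1mx => /matrixP /(_ 0 0); rewrite !mxE eqxx mulr1n.
by rewrite !mulr1.
Qed.

Lemma T3_inv (R : realType) d n (phi : 'I_n -> 'cV[R[i]]_d) U (s : 'S_n) :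
  (forall j, inner (phi j) (phi j) = 1) ->
  sym_with phi U s -> forall j k l, T3 phi (s j) (s k) (s l) = T3 phi j k l.
Proof.
move=> Hn [HU HP] j k l.
apply: (@extract_scalar _ _ (phi (s j))); first exact: Hn.
rewrite /T3 -proj_triple -!HP -!conj_mx_mul // proj_triple.
move: (proj1 (phi j)) => P; by rewrite -scalemxAr [RHS]scalemxAl.
Qed.

Lemma pair_sq (R : realType) d n (phi : 'I_n -> 'cV[R[i]]_d) (alpha : R) :
  (forall j k, j != k -> `|inner (phi j) (phi k)| = (alpha%:C)%C) ->
  forall x y, x != y ->
  inner (phi x) (phi y) * inner (phi y) (phi x) = (alpha%:C)%C ^+ 2.
Proof.
move=> Ha x y xy.
by rewrite [inner (phi y) (phi x)]innerC -normCK Ha.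
Qed.

Lemma welch (R : realType) d n (phi : 'I_n -> 'cV[R[i]]_d) (alpha : R) (k : 'I_n) :
  (forall x : 'cV[R[i]]_d,
         x = ((d%:R / n%:R) : R[i]) *: \sum_(j < n) (inner x (phi j) *: phi j)) ->
  (forall j, inner (phi j) (phi j) = 1) ->
  (forall j k, j != k -> `|inner (phi j) (phi k)| = (alpha%:C)%C) ->
  (0 < d)%N -> (d < n)%N ->
  alpha ^+ 2 = (n - d)%:R / (d * (n - 1))%:R.
Proof.
move=> Hf Hn Ha d0 dn.
have := congr1 (fun x => inner x (phi k)) (Hf (phi k)).
rewrite /= Hn inner_scale inner_sum (bigD1 k) //= Hn mulr1.
rewrite (eq_bigr (fun _ => (alpha%:C)%C ^+ 2)); last first.
  by move=> j jk; apply: pair_sq => //; rewrite eq_sym.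
rewrite sumr_const cardC1 card_ord -subn1 => H.
apply: complexI.
rewrite rmorphXn fmorph_div /= !rmorph_nat natrB ?(ltnW dn) // natrM.
set a2 := (alpha%:C)%C ^+ 2 in H *.
set m := ((n - 1)%:R : R[i]) in H *.
have Hm : m != 0 by rewrite /m pnatr_eq0 subn_eq0 -ltnNge (leq_ltn_trans d0 dn).
have HD : (d%:R : R[i]) != 0 by rewrite pnatr_eq0 -lt0n.
have HN : (n%:R : R[i]) != 0 by rewrite pnatr_eq0 -lt0n (ltn_trans d0 dn).
have H2 : (n%:R : R[i]) = d%:R * (1 + a2 *+ (n - 1)).
  by rewrite -[LHS]mul1r {1}H mulrAC divfK.
rewrite H2 -mulr_natr -/m.
by field; apply/andP; split.
Qed.

Lemma T3_nz (R : realType) d n (phi : 'I_n -> 'cV[R[i]]_d) (alpha : R) :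
  (forall j k, j != k -> `|inner (phi j) (phi k)| = (alpha%:C)%C) ->
  (alpha%:C)%C != 0 ->
  forall x y z, x != y -> y != z -> z != x -> T3 phi x y z != 0.
Proof.
move=> Ha a0 x y z xy yz zx.
by rewrite /T3 !mulf_neq0 // -normr_eq0 ?Ha.
Qed.

Theorem mainTheorem2 (R : realType) (d n : nat) (phi : 'I_n -> 'cV[R[i]]_d) :
  is_ETF phi -> doubly_transitive phi -> (d < n)%N ->
  forall j k l : 'I_n, j != k -> k != l -> l != j ->
  exists zeta : R[i], zeta ^+ (2 * n) = 1 /\
    inner (phi j) (phi k) * inner (phi k) (phi l) * inner (phi l) (phi j)
    = zeta * (let c : R := (n - d)%:R / (d * (n - 1))%:R in
              (c * Num.sqrt c)%:C)%C.
Proof.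
move=> [Hf Hn [alpha [a0 Ha]]] Hdt dn j k l jk kl lj.
have d0 : (0 < d)%N.
  rewrite lt0n; apply/negP => /eqP dz.
  have := Hn j; rewrite /inner big1 => [/eqP|i _]; first by rewrite eq_sym oner_eq0.
  by case: i => i Hi; exfalso; move: Hi; rewrite dz.
have Ha2 := welch j Hf Hn Ha d0 dn.
have cpos : (0 : R) < (n - d)%:R / (d * (n - 1))%:R.
  rewrite divr_gt0 // ltr0n ?subn_gt0 // muln_gt0 d0 subn_gt0 /=.
  exact: leq_ltn_trans d0 dn.
have alpha_nz : alpha != 0.
  by apply/negP => /eqP a0'; move: cpos; rewrite -Ha2 a0' expr0n ltxx.
set a := (alpha%:C)%C in Ha.
have anz : a != 0 by rewrite /a (fmorph_eq0 (real_complex R)).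
have Hp := pair_sq Ha.
have aconj : a^* = a by rewrite -(Ha j k jk) conj_normC.
have anorm : `|a| = a by rewrite -(Ha j k jk) normr_id.
set Q := fun x y => \prod_(m | (m != x) && (m != y)) T3 phi x y m.
have HQinv : forall x y x' y', x != y -> x' != y' -> Q x' y' = Q x y.
  move=> x y x' y' xy xy'.
  have [U [s [Hs [e1 e2]]]] := Hdt x y x' y' xy xy'.
  rewrite -e1 -e2 /Q (reindex_inj (@perm_inj _ s)) /=.
  apply: eq_big => m; first by rewrite !(inj_eq (@perm_inj _ s)).
  by move=> _; apply: (T3_inv Hn Hs).
have HQconj : forall x y, Q y x = (Q x y)^*.
  move=> x y; rewrite /Q rmorph_prod; apply: eq_big => m; first by rewrite andbC.
  by move=> _; rewrite /T3 !rmorphM /= -!innerC; ring.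
set q := Q j k.
have qreal : q^* = q.
  by rewrite -HQconj /q; apply: HQinv; rewrite // eq_sym.
have Tnz := T3_nz Ha anz.
have qnz : q != 0.
  apply/prodf_neq0 => m /andP [mj mk]; apply: Tnz => //; rewrite eq_sym //.
set T := T3 phi j k l.
pose p := fun m => [&& m != j, m != k & m != l].
set A := \prod_(m | p m) T3 phi j l m.
set B := \prod_(m | p m) T3 phi j k m.
set C := \prod_(m | p m) T3 phi k l m.
have Hq1 : q = T * B.
  rewrite /q /Q (bigD1 l) /=; last by rewrite lj eq_sym kl.
  congr (_ * _); apply: eq_bigl => m; rewrite /p.
  by case: (m == j); case: (m == k); case: (m == l).
have Hq2 : q = T * C.
  rewrite /q (HQinv k l j k kl jk) /Q (bigD1 j) /=; last by rewrite jk eq_sym lj.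
  congr (_ * _); first by rewrite /T /T3; ring.
  apply: eq_bigl => m; rewrite /p.
  by case: (m == j); case: (m == k); case: (m == l).
have Hq3 : q = T3 phi j l k * A.
  rewrite /q (HQinv j l j k _ jk); last by rewrite eq_sym.
  rewrite /Q (bigD1 k) /=; last by rewrite kl eq_sym jk.
  congr (_ * _); apply: eq_bigl => m; rewrite /p.
  by case: (m == j); case: (m == k); case: (m == l).
have HTT : T3 phi j l k * T = a ^+ 6.
  rewrite /T /T3.
  transitivity ((inner (phi j) (phi k) * inner (phi k) (phi j)) *
    (inner (phi k) (phi l) * inner (phi l) (phi k)) *
    (inner (phi l) (phi j) * inner (phi j) (phi l))); first by ring.
  by rewrite !Hp // 1?eq_sym // -!exprD.
have Hcoc : forall m, p m -> T * T3 phi j l m = T3 phi j k m * T3 phi k l m.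
  move=> m /and3P [mj mk ml].
  have h1 := Hp l j lj.
  have h2 := Hp m k mk.
  rewrite /T /T3.
  transitivity (inner (phi j) (phi k) * inner (phi k) (phi l) *
    inner (phi l) (phi m) * inner (phi m) (phi j) *
    (inner (phi l) (phi j) * inner (phi j) (phi l))); first by ring.
  rewrite h1 -h2; ring.
have Hprod : T ^+ #|p| * A = B * C.
  rewrite -prodr_const /A /B /C -!big_split /=.
  by apply: eq_bigr => m pm; apply: Hcoc.
have Hcard : (#|p| + 3 = n)%N.
  rewrite -sum1_card -[in RHS](card_ord n) -sum1_card.
  rewrite [in RHS](bigD1 j) //= [in RHS](bigD1 k) /=; last by rewrite eq_sym jk.
  rewrite [in RHS](bigD1 l) /=; last by rewrite lj eq_sym kl.
  rewrite [in RHS](eq_bigl p); first by rewrite !add1n addn3.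
  by move=> m; rewrite /p /= andbA.
have HTn : T ^+ n = q * a ^+ 6.
  have E1 : q * q = T ^+ 2 * (T ^+ #|p| * A).
    by rewrite {1}Hq1 Hq2 Hprod; ring.
  have E2 : q * T = a ^+ 6 * A by rewrite Hq3 -HTT; ring.
  apply: (mulfI qnz); symmetry.
  rewrite -Hcard exprD.
  transitivity (q * q * a ^+ 6); first by ring.
  rewrite E1.
  transitivity (T ^+ 2 * T ^+ #|p| * (a ^+ 6 * A)); first by ring.
  rewrite -E2; ring.
pose zeta := T / a ^+ 3.
exists zeta; split.
  have Hz : zeta ^+ n = q * a ^+ 6 / (a ^+ 3) ^+ n.
    by rewrite /zeta exprMn exprVn HTn.
  have Hzr : (zeta ^+ n)^* = zeta ^+ n.
    by rewrite Hz fmorph_div rmorphM /= !rmorphXn /= aconj qreal.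
  have Hzn : `|zeta| = 1.
    rewrite /zeta normf_div normrX anorm /T /T3 !normrM.
    rewrite (Ha _ _ jk) (Ha _ _ kl) (Ha _ _ lj) -expr2 -exprSr divff //.
    by rewrite expf_neq0.
  by rewrite mulnC exprM expr2 -{2}Hzr -normCK normrX Hzn !expr1n.
rewrite /= -Ha2 sqrtr_sqr ger0_norm // -exprSr rmorphXn /= -/a.
by rewrite /zeta divfK // expf_neq0.
Qed.
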